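(* Let $\mathcal{A}=\{a_1<\dots<a_k\}$ be a finite ordered alphabet and let $T$ be an interval exchange transformation on $[\ell,r)$ over $\mathcal{A}$ with permutation $\pi\in S_{\mathcal{A}}$. Then every return word in the language of $T$ is $\pi$-clustering for $\mathcal{A}$; that is, for every $w\in\mathcal{L}(T)$ and every $u\in\mathcal{R}(w)$, the word $u$ is $\pi$-clustering for $\mathcal{A}$.
   Context: An interval is a left-closed right-open real interval. A $k$-IET $T$ on $I=[\ell,r)$ over $\mathcal{A}$ is given by a partition of $I$ into intervals $(I_a)_{a\in\mathcal{A}}$ of positive length, with $I_a$ to the left of $I_b$ whenever $a<b$, together with a permutation $\pi$ of $\mathcal{A}$; it is defined by $T(x)=x+\tau_a$ for $x\in I_a$, where $\tau_a=\sum_{b:\,\pi^{-1}(b)<\pi^{-1}(a)}|I_b|-\sum_{b<a}|I_b|$ (so the image intervals $T(I_{\pi(a_1)}),\dots,T(I_{\pi(a_k)})$ appear from left to right). No minimality or regularity is assumed. The trajectory of $x\in I$ is the infinite word $\Omega_T(x)=w_0w_1w_2\cdots$ with $w_i=a$ iff $T^i(x)\in I_a$. The language $\mathcal{L}(T)$ is the set of all finite factors of all trajectories $\Omega_T(x)$, $x\in I$. For $w\in\mathcal{L}(T)$, the set of (left) return words is $\mathcal{R}(w)=\{u\in\mathcal{A}^*: uw\in(\mathcal{L}(T)\cap w\mathcal{A}^* )\setminus \mathcal{A}^+w\mathcal{A}^+\}$. For a word $v$ of length $n$ over $\mathcal{A}$, its Burrows–Wheeler transform $\mathrm{bwt}_{\mathcal{A}}(v)$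 is the word formed by the last letters of the $n$ cyclic rotations (conjugates) of $v$, listed in lexicographic order with respect to the order of $\mathcal{A}$. A word $v$ is $\pi$-clustering for $\mathcal{A}$ if $\mathrm{bwt}_{\mathcal{A}}(v)=\pi(a_1)^{k_1}\pi(a_2)^{k_2}\cdots\pi(a_k)^{k_k}$ where $k_i=|v|_{\pi(a_i)}$ is the number of occurrences of $\pi(a_i)$ in $v$. *)

(* Defs.v *)
From HB Require Import structures.
From mathcomp Require Import all_boot all_order all_algebra all_fingroup.
From mathcomp Require Import reals.
Set Implicit Arguments. Unset Strict Implicit. Unset Printing Implicit Defensive.
Import Order.TTheory GRing.Theory Num.Theory.

(* The ordered alphabet A = {a_1 < ... < a_k} is 'I_k, ordered by the
   natural order of ordinals; a_i is the (i-1)-th ordinal. *)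

Section IET.
Local Open Scope ring_scope.
Variables (R : realType) (k : nat) (l : R) (lam : 'I_k -> R) (pi : {perm 'I_k}).

Definition iet_left (a : 'I_k) : R := l + \sum_(b < k | (b < a)%N) lam b.

Definition iet_in (a : 'I_k) (x : R) : bool :=
  (iet_left a <= x) && (x < iet_left a + lam a).

Definition iet_tau (a : 'I_k) : R :=
  \sum_(b < k | ((pi^-1)%g b < (pi^-1)%g a)%N) lam b
  - \sum_(b < k | (b < a)%N) lam b.

(* the letter coding x (None if x lies in no I_a, i.e. x outside I) *)
Definition iet_letter (x : R) : option 'I_k := [pick a | iet_in a x].

Definition iet_map (x : R) : R :=
  match iet_letter x with Some a => x + iet_tau a | None => x end.

End IET.

Section Lang.
Local Open Scope ring_scope.
Variables (R : realType) (k : nat) (l r : R) (lam : 'I_k -> R) (pi : {perm 'I_k}).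

Definition iet_language (w : seq 'I_k) : Prop :=
  exists x : R, l <= x < r /\ exists n : nat,
    [seq iet_letter l lam (iter (n + i) (iet_map l lam pi) x) | i <- iota 0 (size w)]
    = map Some w.

(* (left) return words of w *)
Definition iet_return_word (w u : seq 'I_k) : Prop :=
  iet_language (u ++ w) /\ prefix w (u ++ w) /\
  ~ (exists p s : seq 'I_k, (0 < size p)%N /\ (0 < size s)%N /\ u ++ w = p ++ w ++ s).
End Lang.

Fixpoint lexle (k : nat) (s t : seq 'I_k) : bool :=
  match s, t with
  | [::], _ => true
  | _ :: _, [::] => false
  | a :: s', b :: t' => ((a < b)%N || ((a == b) && lexle s' t'))
  end.

Definition bwt (k : nat) (v : seq 'I_k) : seq 'I_k :=
  pmap (fun c => ohead (rev c))
       (sort (@lexle k) [seq rot i v | i <- iota 0 (size v)]).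

Definition pi_clustering (k : nat) (pi : {perm 'I_k}) (v : seq 'I_k) : Prop :=
  bwt v = flatten [seq nseq (count_mem (pi i) v) (pi i) | i <- enum 'I_k].

(* Main.v *)
Require Import Defs.
From HB Require Import structures.
From mathcomp Require Import all_boot all_order all_algebra all_fingroup.
From mathcomp Require Import reals.
From mathcomp Require Import zify ring lra.
Import Order.TTheory GRing.Theory Num.Theory.

Lemma lexle_total k : total (@lexle k).
Proof.
elim=> [|a s IH] [|b t] //=.
case: (ltngtP a b) => H //=; first by rewrite orbT.
have -> : a = b by apply: val_inj.
by rewrite eqxx /= IH.
Qed.

Lemma lexlt_not k (x0 : 'I_k) t : forall s1 s2 : seq 'I_k,
  (t < size s1)%N -> (t < size s2)%N ->
  (forall q, (q < t)%N -> nth x0 s1 q = nth x0 s2 q) ->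
  (nth x0 s1 t < nth x0 s2 t)%N -> ~~ lexle s2 s1.
Proof.
elim: t => [|t IH] [|a s1] [|b s2] //= H1 H2 Heq Hlt.
  rewrite ltnNge (ltnW Hlt) /=; apply/negP=> /andP[/eqP E _]; by move: Hlt; rewrite E ltnn.
have ab : a = b by apply: (Heq 0%N).
subst b; rewrite ltnn eqxx /=.
apply: IH H1 H2 _ _ => // q Hq; exact: (Heq q.+1).
Qed.

Lemma nth_rot' T (x0 : T) (s : seq T) i t : (i < size s)%N -> (t < size s)%N ->
  nth x0 (rot i s) t = nth x0 s ((i + t) %% size s).
Proof.
move=> Hi Ht; rewrite /rot nth_cat size_drop.
case: ltnP => H.
  rewrite nth_drop modn_small //; lia.
rewrite nth_take; last lia.
have -> : (i + t) = (t - (size s - i)) + size s by lia.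
rewrite modnDr modn_small //; lia.
Qed.
Section Comb.
Variables (k : nat) (pi : {perm 'I_k}).
Definition keyle (a b : 'I_k) : bool := ((pi^-1)%g a <= (pi^-1)%g b)%N.

Lemma keyle_trans : transitive keyle.
Proof. move=> a b c; rewrite /keyle; exact: leq_trans. Qed.

Lemma keyle_anti : antisymmetric keyle.
Proof.
move=> a b /andP[h1 h2]; apply: (@perm_inj _ (pi^-1)%g); apply: val_inj => /=.
by apply/eqP; rewrite eqn_leq; apply/andP; split.
Qed.

Lemma pmap_last (x0 : 'I_k) (S : seq (seq 'I_k)) :
  all (fun c => c != [::]) S ->
  pmap (fun c => ohead (rev c)) S = map (last x0) S.
Proof.
elim: S => //= c S IH /andP[hc hS]; rewrite IH //.
by case/lastP: c hc => // c a _; rewrite rev_rcons last_rcons.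
Qed.

Lemma flat_perm (u : seq 'I_k) :
  perm_eq (flatten [seq nseq (count_mem (pi i) u) (pi i) | i <- enum 'I_k]) u.
Proof.
apply/seq.permP => P.
rewrite count_flatten -map_comp.
transitivity (\sum_(i <- enum 'I_k) (P (pi i) * count_mem (pi i) u)).
  by rewrite sumnE big_map; apply: eq_bigr => i _ /=; rewrite count_nseq.
rewrite big_enum /=.
rewrite (reindex_inj (@perm_inj _ (pi^-1)%g)) /=.
under eq_bigr do rewrite permKV.
elim: u => [|a u IH] /=; first by rewrite big1 // => i _; rewrite muln0.
rewrite -IH.
under eq_bigr do rewrite mulnDr.
rewrite big_split /=; congr (_ + _).
rewrite (bigD1 a) ?inE //= eqxx muln1 big1 ?addn0 // => i ne.
by rewrite eq_sym (negPf ne) muln0.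
Qed.

Lemma flat_sorted (u : seq 'I_k) :
  sorted keyle (flatten [seq nseq (count_mem (pi i) u) (pi i) | i <- enum 'I_k]).
Proof.
rewrite sorted_pairwise; last exact: keyle_trans.
have : pairwise (relpre val ltn) (enum 'I_k).
  by rewrite -pairwise_map val_enum_ord -sorted_pairwise ?iota_ltn_sorted //; exact: ltn_trans.
elim: (enum 'I_k) => //= i s IH /andP[Hall Hpw].
rewrite pairwise_cat; apply/and3P; split; last exact: IH.
- apply/allrelP => x y; rewrite mem_nseq => /andP[_ /eqP ->].
  case/flattenP => b /mapP[j js ->]; rewrite mem_nseq => /andP[_ /eqP ->].
  by rewrite /keyle !permK; apply: ltnW; exact: (allP Hall j js).
- elim: (count_mem (pi i) u) => //= n ->; rewrite andbT all_nseq.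
  by rewrite /keyle leqnn orbT.
Qed.

Lemma comb (u : seq 'I_k) (x0 : 'I_k) :
  (forall i j, (i < size u)%N -> (j < size u)%N ->
     ((pi^-1)%g (last x0 (rot i u)) < (pi^-1)%g (last x0 (rot j u)))%N ->
     ~~ lexle (rot j u) (rot i u)) ->
  pi_clustering pi u.
Proof.
move=> H; rewrite /pi_clustering /bwt.
set rots := [seq rot i u | i <- iota 0 (size u)].
case: (posnP (size u)) => [/size0nil Eu | n0].
  rewrite /rots Eu /=.
  by elim: (enum 'I_k) => //.
rewrite (pmap_last x0); last first.
  apply/allP => c; rewrite mem_sort => /mapP[i _ ->].
  by rewrite -size_eq0 size_rot -lt0n n0.
apply: (sorted_eq keyle_trans keyle_anti).
- apply: (@homo_sorted_in _ _ (mem rots) (last x0) (@lexle k)).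
  + move=> c d /mapP[i]; rewrite mem_iota add0n => /andP[_ Hi] -> /mapP[j].
    rewrite mem_iota add0n => /andP[_ Hj] -> Hle.
    rewrite /keyle leqNgt; apply/negP => Hlt.
    by move/negP: (H j i Hj Hi Hlt).
  + by apply/allP => c; rewrite mem_sort.
  + exact: sort_sorted (@lexle_total k) _.
- exact: flat_sorted.
- rewrite perm_sym; apply: (perm_trans (flat_perm u)); rewrite perm_sym.
  apply: (perm_trans (perm_map (last x0) (_ : perm_eq _ rots))); first by rewrite perm_sort.
  have -> : map (last x0) rots = rot (size u).-1 u.
    rewrite /rots -map_comp.
    apply: (@eq_from_nth _ x0); first by rewrite size_map size_iota size_rot.
    move=> i; rewrite size_map size_iota => Hi.
    rewrite (nth_map 0%N) ?size_iota // nth_iota // add0n.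
    rewrite /= -nth_last size_rot !nth_rot' //; first by rewrite addnC.
      by rewrite prednK.
    by rewrite ltn_predL.
  by rewrite perm_rot.
Qed.
End Comb.
Section Real.
Local Open Scope ring_scope.
Variables (R : realType) (k : nat) (l : R) (lam : 'I_k -> R) (pi : {perm 'I_k}).
Hypothesis Hpos : forall a, 0 < lam a.

Lemma sum_sub (P Q : pred 'I_k) b : (forall c, P c -> Q c) -> Q b -> ~~ P b ->
  \sum_(c | P c) lam c + lam b <= \sum_(c | Q c) lam c.
Proof.
move=> PQ Qb Pb.
rewrite (bigID P Q) /=.
have -> : \sum_(i | Q i && P i) lam i = \sum_(c | P c) lam c.
  by apply: eq_bigl => c; case Pc: (P c); rewrite ?andbT ?andbF ?PQ.
rewrite lerD2l (bigD1 b) /=; last by rewrite Qb.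
rewrite lerDl; apply: sumr_ge0 => c _; exact: ltW.
Qed.

Lemma interval_order a b x x' : iet_in l lam a x -> iet_in l lam b x' -> x < x' ->
  (a <= b)%N.
Proof.
rewrite /iet_in /iet_left => /andP[ha _] /andP[_ hb] xx.
rewrite leqNgt; apply/negP => ba.
have := @sum_sub (fun c : 'I_k => (c < b)%N) (fun c : 'I_k => (c < a)%N) b.
move=> /(_ (fun c cb => ltn_trans cb ba) ba (negbT (ltnn _))) H.
have : x' < x; last by rewrite ltNge (ltW xx).
apply: (lt_le_trans hb); apply: (le_trans _ ha).
by rewrite -addrA lerD2l.
Qed.

Lemma image_order c d x x' : iet_in l lam c x -> iet_in l lam d x' ->
  ((pi^-1)%g c < (pi^-1)%g d)%N -> x + iet_tau lam pi c < x' + iet_tau lam pi d.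
Proof.
rewrite /iet_in /iet_left /iet_tau => /andP[_ hc] /andP[hd _] cd.
have := @sum_sub (fun b : 'I_k => ((pi^-1)%g b < (pi^-1)%g c)%N)
   (fun b : 'I_k => ((pi^-1)%g b < (pi^-1)%g d)%N) c.
move=> /(_ (fun b bc => ltn_trans bc cd) cd (negbT (ltnn _))) H.
set Sc := \sum_(b < k | ((pi^-1)%g b < (pi^-1)%g c)%N) lam b in H *.
set Sd := \sum_(b < k | ((pi^-1)%g b < (pi^-1)%g d)%N) lam b in H *.
set Lc := \sum_(b < k | (b < c)%N) lam b in hc *.
set Ld := \sum_(b < k | (b < d)%N) lam b in hd *.
lra.
Qed.
End Real.
Lemma first_diff k (f g : nat -> 'I_k) L :
  (forall s, s < L -> f s = g s) \/
  exists t, [/\ t < L, (forall s, s < t -> f s = g s) & f t != g t].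
Proof.
elim: L => [|L [IH|IH]]; first by left.
- case: (eqVneq (f L) (g L)) => E.
    by left => s; rewrite ltnS leq_eqVlt => /orP[/eqP -> //|]; apply: IH.
  by right; exists L; split.
- by right; case: IH => t [h1 h2 h3]; exists t; split => //; apply: ltnW.
Qed.

Lemma word_claim k (W : nat -> 'I_k) (key : 'I_k -> nat) (n sw : nat) :
  (forall t, t + n < n + sw -> W (t + n) = W t) ->
  (forall e, 0 < e < n -> (forall r, r < sw -> W (e + r) = W (n + r)) -> False) ->
  (forall i j, 0 < i <= n -> 0 < j <= n -> key (W i.-1) < key (W j.-1) ->
     forall t, i + t < n + sw -> j + t < n + sw ->
     (forall s, s < t -> W (i + s) = W (j + s)) -> W (i + t) <= W (j + t)) ->
  forall i j, 0 < i <= n -> 0 < j <= n -> key (W i.-1) < key (W j.-1) ->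
  exists t, [/\ t < n, i + t < n + sw, j + t < n + sw,
     (forall s, s < t -> W (i + s) = W (j + s)) & W (i + t) < W (j + t)].
Proof.
move=> Hper Hocc Hmono i j Hi Hj Hk.
have ij : i != j by apply/eqP => E; move: Hk; rewrite E ltnn.
case: (@first_diff _ (fun s => W (i + s)) (fun s => W (j + s)) (n + sw - maxn i j)) => [Hall|].
  exfalso.
  case: (ltngtP i j) => [lt|gt|eq]; last by rewrite eq eqxx in ij.
  - apply: (Hocc (n - (j - i))); first lia.
    move=> r Hr.
    have := Hall (n - j + r) ltac:(lia).
    have -> : i + (n - j + r) = n - (j - i) + r by lia.
    by have -> : j + (n - j + r) = n + r by lia.
  - apply: (Hocc (n - (i - j))); first lia.
    move=> r Hr.
    have := Hall (n - i + r) ltac:(lia).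
    have -> : j + (n - i + r) = n - (i - j) + r by lia.
    by have -> : i + (n - i + r) = n + r by lia.
case=> t [Ht Hagree Hne].
have Hle := Hmono i j Hi Hj Hk t ltac:(lia) ltac:(lia) Hagree.
exists t; split => //; try lia.
- case: (ltnP t n) => // tn; exfalso.
  have := Hagree n.-1 ltac:(lia).
  have -> : i + n.-1 = i.-1 + n by lia.
  have -> : j + n.-1 = j.-1 + n by lia.
  rewrite !Hper; try lia.
  by move=> E; move: Hk; rewrite E ltnn.
- by rewrite ltn_neqAle Hle andbT; move: Hne; apply: contra => /eqP E; apply/eqP/val_inj.
Qed.

Theorem theorem6p1 (R : realType) (k : nat) (l r : R) (lam : 'I_k -> R)
    (pi : {perm 'I_k})
    (Hpos : forall a : 'I_k, (0 < lam a)%R)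
    (Hr : r = (l + \sum_(a < k) lam a)%R) :
  forall w u : seq 'I_k,
    iet_language l r lam pi w ->
    iet_return_word l r lam pi w u ->
    pi_clustering pi u.
Proof.
move=> w u _ [[x [/andP[xl xr] [n0 Hmap]]] [Hpre Hno]].
case Eu: u => [|a0 u'].
  by rewrite /pi_clustering /bwt /=; elim: (enum 'I_k).
rewrite -Eu.
apply: (@comb k pi u a0).
pose n := size u.
have n0p : 0 < n by rewrite /n Eu.
pose y i := iter (n0 + i) (iet_map l lam pi) x.
pose W i := nth a0 (u ++ w) i.
have Hm : size (u ++ w) = n + size w by rewrite size_cat.
have Hlet : forall i, i < n + size w -> iet_letter l lam (y i) = Some (W i).
  move=> i Hi; have := congr1 (fun s => nth None s i) Hmap.
  have Hi' : i < size (u ++ w) by rewrite size_cat.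
  rewrite /= (nth_map 0%N) ?size_iota // nth_iota // add0n.
  by rewrite (nth_map a0).
have Hin : forall i, i < n + size w -> iet_in l lam (W i) (y i).
  move=> i /Hlet; rewrite /iet_letter; case: pickP => [a Ha [<-] //| _ //].
have Hstep : forall i, i < n + size w -> y i.+1 = (y i + iet_tau lam pi (W i))%R.
  move=> i Hi; have := Hlet i Hi; rewrite /y addnS iterS /= => HL.
  by rewrite {1}/iet_map HL.
have Hper : forall t, t + n < n + size w -> W (t + n) = W t.
  case/prefixP: Hpre => s2 Hs2 t Ht.
  rewrite /W nth_cat ltnNge leq_addl /= addnK Hs2 nth_cat ifT //; lia.
have Hocc : forall e, 0 < e < n -> (forall r, r < size w -> W (e + r) = W (n + r)) -> False.
  move=> e He Hr'; apply: Hno.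
  exists (take e (u ++ w)), (drop (e + size w) (u ++ w)).
  split; first by rewrite size_takel ?Hm; lia.
  split; first by rewrite size_drop ?Hm; lia.
  rewrite -{1}(cat_take_drop e (u ++ w)); congr (_ ++ _).
  rewrite -{1}(cat_take_drop (size w) (drop e (u ++ w))) drop_drop addnC; congr (_ ++ _).
  have Hsz : size (take (size w) (drop e (u ++ w))) = size w.
    by rewrite size_takel // size_drop ?Hm; lia.
  apply: (@eq_from_nth _ a0) => // q; rewrite Hsz => Hq.
  rewrite nth_take // nth_drop.
  have := Hr' q Hq; rewrite /W => ->.
  by rewrite nth_cat ltnNge leq_addr /= addKn.
have Hmono : forall i j, 0 < i <= n -> 0 < j <= n ->
     ((pi^-1)%g (W i.-1) < (pi^-1)%g (W j.-1))%N ->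
     forall t, i + t < n + size w -> j + t < n + size w ->
     (forall s, s < t -> W (i + s) = W (j + s)) -> W (i + t) <= W (j + t).
  move=> i j Hi Hj Hk t Hit Hjt Hag.
  have yij : (y i < y j)%R.
    have := @image_order R k l lam pi Hpos _ _ _ _ (Hin i.-1 ltac:(lia)) (Hin j.-1 ltac:(lia)) Hk.
    rewrite -(Hstep i.-1) ?prednK; try lia.
    by rewrite -(Hstep j.-1) ?prednK; try lia.
  have Hd : forall s, s <= t -> (y (i + s)%N - y (j + s)%N = y i - y j)%R.
    elim=> [|s IH] Hs; first by rewrite !addn0.
    rewrite !addnS !Hstep; try lia.
    rewrite (Hag s) //; have := IH (ltnW Hs); lra.
  have : (y (i + t)%N < y (j + t)%N)%R by have := Hd t (leqnn t); lra.
  exact: (@interval_order R k l lam Hpos _ _ _ _ (Hin _ Hit) (Hin _ Hjt)).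
have HWu : forall p, p < n + size w -> W p = nth a0 u (p %% n).
  elim/ltn_ind => p IH Hp.
  case: (ltnP p n) => pn.
    by rewrite /W nth_cat -/n pn modn_small.
  have -> : p = (p - n) + n by lia.
  rewrite Hper; last lia.
  rewrite IH; try lia.
  by rewrite modnDr.
pose pr i := if i == 0 then n else i.
have Hlast : forall i, i < n -> last a0 (rot i u) = W (pr i).-1.
  move=> i Hi; rewrite -nth_last size_rot nth_rot' -/n; try lia.
  rewrite HWu; last by rewrite /pr; case: eqP; lia.
  rewrite /pr; case: eqP => [->|ne]; first by rewrite add0n.
  have -> : i + n.-1 = i.-1 + n by lia.
  by rewrite modnDr.
have Hnth : forall i s, i < n -> s < n -> pr i + s < n + size w ->
    nth a0 (rot i u) s = W (pr i + s).
  move=> i s Hi Hs Hps; rewrite nth_rot' -/n // HWu //.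
  rewrite /pr; case: eqP => [->|ne] //.
  by rewrite add0n addnC modnDr.
move=> i j Hi Hj Hk.
rewrite !Hlast // in Hk.
have Hpi : 0 < pr i <= n by rewrite /pr; case: eqP; lia.
have Hpj : 0 < pr j <= n by rewrite /pr; case: eqP; lia.
have [t [Ht Hit Hjt Hag Hlt]] :=
  @word_claim k W (fun a => nat_of_ord ((pi^-1)%g a)) n (size w) Hper Hocc Hmono
    (pr i) (pr j) Hpi Hpj Hk.
apply: (@lexlt_not k a0 t (rot i u) (rot j u)); rewrite ?size_rot //.
- move=> q Hq; rewrite !Hnth; try lia; exact: Hag.
- rewrite !Hnth //.
Qed.
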